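(* Let $\mathcal{T}$ be a single-elimination tournament with at least two players, let $R$ be a uniformly random bracket of $\mathcal{T}$, and define $q_{\mathrm{pair}}=\min_{a,b\in P(\mathcal{T}),\,a\ne b}\Pr[R(x_{a,b})\in\{a,b\}]$. If $\mathcal{T}$ has $N$ total brackets, then for every scoring system $\sigma$, $\mathrm{res}(\mathcal{T},\sigma)>(1-q_{\mathrm{pair}})N$.
   Context: A single-elimination tournament is a finite directed graph $\mathcal{T}$ such that: (a) $\mathcal{T}$ has exactly one sink (vertex with no out-neighbours); (b) every non-sink vertex has exactly one out-neighbour; (c) $\mathcal{T}$ has no directed cycles; (d) $|N^-(v)|\ne 1$ for every vertex $v$, where $N^-(v)$ denotes the set of in-neighbours of $v$. The players $P(\mathcal{T})$ are the sources and the matches are $M(\mathcal{T})=V(\mathcal{T})\setminus P(\mathcal{T})$. For a vertex $u$, $P(u)$ is the set of players $a$ for which there is a directed walk from $a$ to $u$ (length $0$ allowed). For distinct players $a,b$, $x_{a,b}$ denotes the unique match $x$ having in-neighbours $u_a,u_b\in N^-(x)$ with $P(u_a)\cap\{a,b\}=\{a\}$ and $P(u_b)\cap\{a,b\}=\{b\}$ (such a match exists and is unique). A bracket is a function $B:V(\mathcal{T})\to P(\mathcal{T})$ with $B(a)=a$ for every player $a$ and $B(x)\in\{B(u):u\in N^-(x)\}$ for every match $x$. A scoring system is any function $\sigma:M(\mathcal{T})\to\mathbb{R}_{>0}$. For brackets $B,B'$ let $\mathrm{score}_\sigma(B,B')=\sum_{x\in M(\mathcal{T}):\,B(x)=B'(x)}\sigma(x)$.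 A set of brackets $\mathcal{B}$ is $\sigma$-resolving if for every pair of distinct brackets $B\ne B'$ there is $B_i\in\mathcal{B}$ with $\mathrm{score}_\sigma(B_i,B)\ne\mathrm{score}_\sigma(B_i,B')$. $\mathrm{res}(\mathcal{T},\sigma)$ is the minimum $r$ such that every set of $r$ brackets is $\sigma$-resolving. *)

(* Defs.v *)
From HB Require Import structures.
From mathcomp Require Import all_boot all_order all_algebra.
From mathcomp Require Import reals.
Set Implicit Arguments. Unset Strict Implicit. Unset Printing Implicit Defensive.
Import Order.TTheory GRing.Theory Num.Theory.
Local Open Scope ring_scope.

Section Tournament.
Variable V : finType.
(* the directed graph: e u v means there is an arc u -> v *)
Variable e : rel V.

Definition outN (v : V) : {set V} := [set w | e v w].
Definition inN (v : V) : {set V} := [set u | e u v].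

Definition is_sink (v : V) : bool := #|outN v| == 0%N.

Definition single_elim : Prop :=
  [/\ #|[set v | is_sink v]| = 1%N,
      (forall v, ~~ is_sink v -> #|outN v| = 1%N),
      (forall u v, e u v -> ~~ connect e v u)
    & (forall v, #|inN v| != 1%N)].

Definition is_player (v : V) : bool := #|inN v| == 0%N.
Definition is_match (v : V) : bool := ~~ is_player v.

Definition Pl (u : V) : {set V} := [set a | is_player a && connect e a u].

Definition is_xab (a b x : V) : bool :=
  is_match x &&
  [exists ua, [exists ub,
     [&& e ua x, e ub x,
         Pl ua :&: [set a; b] == [set a] &
         Pl ub :&: [set a; b] == [set b]]]].

Definition xab (a b : V) : option V := [pick x | is_xab a b x].

Definition is_bracket (B : {ffun V -> V}) : bool :=
  [forall a, is_player a ==> (B a == a)] &&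
  [forall x, is_match x ==> [exists u, e u x && (B x == B u)]].

Definition brackets : {set {ffun V -> V}} := [set B | is_bracket B].

Variable R : realType.

Definition pr_pair (a b : V) : R :=
  (#|[set B in brackets |
       if xab a b is Some x then B x \in [set a; b] else false]|%:R)
  / (#|brackets|%:R).

Definition q_pair : R :=
  \big[Num.min/1]_(p : V * V | [&& is_player p.1, is_player p.2 & p.1 != p.2])
     pr_pair p.1 p.2.

(* scoring system: sigma only matters (and is required positive) on matches *)
Definition score (sigma : V -> R) (B B' : {ffun V -> V}) : R :=
  \sum_(x | is_match x && (B x == B' x)) sigma x.

Definition resolving (sigma : V -> R) (S : {set {ffun V -> V}}) : bool :=
  [forall B in brackets, forall B' in brackets,
     (B != B') ==> [exists Bi in S, score sigma Bi B != score sigma Bi B']].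

Definition all_resolving (sigma : V -> R) (r : nat) : bool :=
  [forall S : {set {ffun V -> V}},
     ((S \subset brackets) && (#|S| == r)) ==> resolving sigma S].

Lemma all_resolving_ex (sigma : V -> R) : exists r, all_resolving sigma r.
Proof.
exists (#|{ffun V -> V}|.+1); apply/forallP => S; apply/implyP => /andP [_ /eqP hS].
by have := max_card (mem S); rewrite hS ltnn.
Qed.

Definition res (sigma : V -> R) : nat := ex_minn (all_resolving_ex sigma).

End Tournament.

(* Main.v *)
Require Import Defs.
From HB Require Import structures.
From mathcomp Require Import all_boot all_order all_algebra.
From mathcomp Require Import reals.
From mathcomp Require Import zify.
Set Implicit Arguments. Unset Strict Implicit. Unset Printing Implicit Defensive.
Import Order.TTheory GRing.Theory Num.Theory.

Section Graph.
Variables (V : finType) (e : rel V).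
Hypothesis hse : single_elim e.

Lemma inPl c v : (c \in Pl e v) = is_player e c && connect e c v.
Proof. by rewrite /Pl inE. Qed.

Lemma acyc u v : e u v -> ~~ connect e v u.
Proof. by case: hse => _ _ h _; apply: h. Qed.

Lemma out_uniq u y z : e u y -> e u z -> y = z.
Proof.
move=> hy hz; case: hse => _ hb _ _.
have hns : ~~ is_sink e u.
  rewrite /is_sink; apply/negP => /eqP/cards0_eq h.
  have : y \in outN e u by rewrite /outN inE.
  by rewrite h inE.
have /cards1P [w hw] : #|outN e u| == 1 by rewrite hb.
have : y \in outN e u by rewrite /outN inE.
have : z \in outN e u by rewrite /outN inE.
by rewrite hw !inE => /eqP -> /eqP ->.
Qed.

Lemma last_step c x : connect e c x -> c = x \/ exists2 u, connect e c u & e u x.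
Proof.
move=> /connectP [p hp ->]; elim/last_ind: p hp => [|p z _] /=; first by left.
rewrite rcons_path last_rcons => /andP [hp hz]; right; exists (last c p) => //.
by apply/connectP; exists p.
Qed.

Lemma first_step c x : connect e c x -> c = x \/ exists2 z, e c z & connect e z x.
Proof.
move=> /connectP [[|z p] /= hp ->]; first by left.
case/andP: hp => hz hp; right; exists z => //; apply/connectP; by exists p.
Qed.

Lemma step_out u v y : connect e u v -> u != v -> e u y -> connect e y v.
Proof.
case/first_step => [-> /eqP //|[z hz hzv]] _ hy.
by rewrite (out_uniq hy hz).
Qed.

Lemma comparable c x w : connect e c x -> connect e c w -> connect e x w \/ connect e w x.
Proof.
move=> /connectP [p hp ->]; elim: p c hp => [|z p IH] c /=; first by left.
case/andP=> hz hp hcw.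
case: (eqVneq c w) => [<-|hne].
  by right; apply/connectP; exists (z :: p) => //=; rewrite hz.
exact: IH hp (step_out hcw hne hz).
Qed.

Lemma player_noin a u : is_player e a -> ~~ e u a.
Proof.
rewrite /is_player => /eqP/cards0_eq h; apply/negP => hu.
have : u \in inN e a by rewrite /inN inE.
by rewrite h inE.
Qed.

Lemma player_conn a c : is_player e a -> connect e c a -> c = a.
Proof.
move=> ha /last_step [//|[u _ hu]].
by rewrite (negbTE (player_noin u ha)) in hu.
Qed.

Lemma Pl_mono u v d : connect e u v -> d \in Pl e u -> d \in Pl e v.
Proof.
move=> huv; rewrite !inPl => /andP [-> h] /=; exact: connect_trans h huv.
Qed.

Lemma anc_lt w u : e w u -> #|[set z | connect e z w]| < #|[set z | connect e z u]|.
Proof.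
move=> h; apply: proper_card; apply/properP; split.
  apply/subsetP => z; rewrite !inE => hz; exact: connect_trans hz (connect1 h).
by exists u; rewrite !inE ?connect0 //; apply: acyc h.
Qed.

Lemma desc_lt u z : e u z -> #|[set y | connect e z y]| < #|[set y | connect e u y]|.
Proof.
move=> h; apply: proper_card; apply/properP; split.
  apply/subsetP => y; rewrite !inE => hy; exact: connect_trans (connect1 h) hy.
by exists u; rewrite !inE ?connect0 //; apply: acyc h.
Qed.

Lemma Pl_nonempty v : exists c, c \in Pl e v.
Proof.
have [u hu hmin] := @arg_minnP V v (fun u => connect e u v)
   (fun u => #|[set z | connect e z u]|) (connect0 e v).
exists u; rewrite inPl hu andbT /is_player.
have [h0|hgt] := posnP #|inN e u|; first by [].
case/card_gt0P: hgt => w; rewrite /inN inE => hw.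
have := hmin w (connect_trans (connect1 hw) hu).
by rewrite leqNgt anc_lt.
Qed.

Lemma reach_sink u : exists2 s, is_sink e s & connect e u s.
Proof.
have [d hd hmin] := @arg_minnP V u (fun z => connect e u z)
   (fun z => #|[set y | connect e z y]|) (connect0 e u).
exists d => //; rewrite /is_sink.
have [h0|hgt] := posnP #|outN e d|; first by [].
case/card_gt0P: hgt => z; rewrite /outN inE => hz.
have := hmin z (connect_trans hd (connect1 hz)).
by rewrite leqNgt desc_lt.
Qed.

Lemma sink_uniq s t : is_sink e s -> is_sink e t -> s = t.
Proof.
case: hse => ha _ _ _ hs ht.
have /cards1P [w hw] : #|[set v | is_sink e v]| == 1 by rewrite ha.
have : s \in [set v | is_sink e v] by rewrite inE.
have : t \in [set v | is_sink e v] by rewrite inE.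
by rewrite hw !inE => /eqP -> /eqP ->.
Qed.

Lemma I2 (A : {set V}) a b : a != b -> (a \in A) -> (b \notin A) ->
  A :&: [set a; b] == [set a].
Proof.
move=> hab ha hb; apply/eqP/setP => z; rewrite in_setI in_set2 in_set1.
have [->|hza] := eqVneq z a; first by rewrite ha.
have [->|hzb] := eqVneq z b; first by rewrite (negbTE hb).
by rewrite andbF.
Qed.

Lemma I2' (A : {set V}) a b : a != b -> A :&: [set a; b] == [set a] ->
  (a \in A) /\ (b \notin A).
Proof.
move=> hab /eqP/setP h; have := h a; have := h b.
rewrite !in_setI !in_set2 !in_set1 !eqxx (eq_sym b a) (negbTE hab) /= ?orbT ?andbT.
by move=> -> ->.
Qed.

Lemma xab_exists a b : is_player e a -> is_player e b -> a != b ->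
  exists x, is_xab e a b x.
Proof.
move=> ha hb hab.
have [sa hsa hca] := reach_sink a.
have [sb hsb hcb] := reach_sink b.
have esab := sink_uniq hsa hsb; subst sb.
have [x /andP [hax hbx] hmin] := @arg_minnP V sa
   (fun z => connect e a z && connect e b z)
   (fun z => #|[set y | connect e y z]|) (introT andP (conj hca hcb)).
exists x.
case: (last_step hax) => [eax|[ua hua heua]].
  by subst x; move: hab; rewrite (player_conn ha hbx) eqxx.
case: (last_step hbx) => [ebx|[ub hub heub]].
  by subst x; move: hab; rewrite (player_conn hb hax) eqxx.
apply/andP; split.
  rewrite /is_match; apply/negP => hx.
  by move: hab; rewrite (player_conn hx hax) (player_conn hx hbx) eqxx.
apply/existsP; exists ua; apply/existsP; exists ub.
rewrite heua heub /=; apply/andP; split.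
  apply: I2 => //; first by rewrite inPl ha hua.
  rewrite inPl hb /=; apply/negP => hbua.
  have := hmin ua; rewrite hua hbua => /(_ isT).
  by rewrite leqNgt anc_lt.
rewrite setUC.
apply: I2; first by rewrite eq_sym.
  by rewrite inPl hb hub.
rewrite inPl ha /=; apply/negP => haub.
have := hmin ub; rewrite hub haub => /(_ isT).
by rewrite leqNgt anc_lt.
Qed.


Section Rank.
Variable rho : V -> nat.
Hypothesis rho_inj : injective rho.

Definition rb_val v : V :=
  odflt v [pick c | (c \in Pl e v) && [forall d, (d \in Pl e v) ==> (rho d <= rho c)]].

Lemma rb_spec v : rb_val v \in Pl e v /\ forall d, d \in Pl e v -> rho d <= rho (rb_val v).
Proof.
rewrite /rb_val; case: pickP => [c /andP [hc /forallP hf]|hnone] /=.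
  by split => // d hd; have := hf d; rewrite hd.
exfalso; have [c0 hc0] := Pl_nonempty v.
have [m hm hmax] := @arg_maxnP V c0 (fun c => c \in Pl e v) rho hc0.
have := hnone m; rewrite hm /=; move/negbT/negP; apply.
by apply/forallP => d; apply/implyP; exact: hmax.
Qed.

Lemma rb_uniq v c : c \in Pl e v -> (forall d, d \in Pl e v -> rho d <= rho c) ->
  rb_val v = c.
Proof.
move=> hc hm; have [h1 h2] := rb_spec v.
apply: rho_inj; apply/eqP; by rewrite eqn_leq (hm _ h1) (h2 _ hc).
Qed.

Lemma rb_bracket : is_bracket e [ffun v => rb_val v].
Proof.
apply/andP; split; apply/forallP => v; apply/implyP => hv.
  rewrite ffunE; case: (rb_spec v) => h _.
  by rewrite inPl in h; case/andP: h => _ h; rewrite (player_conn hv h).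
have [hrv hmax] := rb_spec v.
move: (hrv); rewrite inPl => /andP [hp hc].
case: (last_step hc) => [heq|[u hcu heu]].
  by move: hv; rewrite /is_match -heq hp.
apply/existsP; exists u; rewrite heu !ffunE /=.
have [hru hmaxu] := rb_spec u.
apply/eqP/rho_inj/eqP; rewrite eqn_leq; apply/andP; split.
  by apply: hmaxu; rewrite inPl hp hcu.
by apply: hmax; apply: Pl_mono hru; apply: connect1.
Qed.

End Rank.

Section Construct.
Variables (a b x ua ub : V).
Hypotheses (ha : is_player e a) (hb : is_player e b) (hab : a != b)
  (hxm : is_match e x) (hua : e ua x) (hub : e ub x)
  (haua : a \in Pl e ua) (hbub : b \in Pl e ub) (haub : a \notin Pl e ub).

Definition grp v : nat :=
  if v \notin Pl e x then 3 else if v == a then 2 else if v == b then 1 else 0.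
Definition rho v : nat := grp v * #|V| + enum_rank v.

Lemma rho_inj : injective rho.
Proof.
move=> c d h.
have : rho c %% #|V| = rho d %% #|V| by rewrite h.
rewrite /rho !modnMDl !modn_small ?ltn_ord // => /val_inj/enum_rank_inj //.
Qed.

Lemma rho_lt c d : grp c < grp d -> rho c < rho d.
Proof.
move=> h; rewrite /rho.
have h1 : (enum_rank c < #|V|) by exact: ltn_ord.
nia.
Qed.

Definition Bx : {ffun V -> V} := [ffun v => rb_val rho v].

Lemma Bx_x : Bx x = a.
Proof.
rewrite ffunE; apply: rb_uniq; first exact: rho_inj.
  exact: Pl_mono (connect1 hua) haua.
move=> d hd; have [->//|hda] := eqVneq d a.
have hax : a \in Pl e x by exact: Pl_mono (connect1 hua) haua.
apply/ltnW/rho_lt; rewrite /grp hd hax /= eqxx (negbTE hda) /=.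
by case: (d == b).
Qed.

Lemma Bx_ub : Bx ub = b.
Proof.
rewrite ffunE; apply: rb_uniq; first exact: rho_inj.
  exact: hbub.
move=> d hd; have [->//|hdb] := eqVneq d b.
have hda : d != a by apply: contraNneq haub => <-.
have hdx : d \in Pl e x by exact: Pl_mono (connect1 hub) hd.
apply/ltnW/rho_lt; rewrite /grp hdx /= eqxx (negbTE hda) (negbTE hdb) /=.
have hbx : b \in Pl e x by exact: Pl_mono (connect1 hub) hbub.
by rewrite hbx /= eq_sym (negbTE hab).
Qed.

Lemma Bx_parent y : e x y -> Bx y \notin Pl e x.
Proof.
move=> hxy.
have [w hw hwx] : exists2 w, e w y & w != x.
  case: hse => _ _ _ hd.
  have hxin : x \in inN e y by rewrite /inN inE.
  have := hd y; rewrite (cardsD1 x) hxin => hne.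
  have : 0 < #|inN e y :\ x| by rewrite lt0n; apply: contraNneq hne => ->.
  case/card_gt0P => w; rewrite !inE => /andP [hwx hwy]; by exists w.
have [c hc] := Pl_nonempty w.
have hcy : c \in Pl e y by exact: Pl_mono (connect1 hw) hc.
have hcx : c \notin Pl e x.
  apply/negP => hcx; move: hc hcx; rewrite !inPl => /andP [_ hcw] /andP [_ hcx].
  case: (comparable hcx hcw) => hc2.
    have hxw : x != w by rewrite eq_sym.
    have := step_out hc2 hxw hxy.
    by apply/negP; apply: acyc hw.
  have := step_out hc2 hwx hw.
  by apply/negP; apply: acyc hxy.
rewrite ffunE; have [_ hmax] := rb_spec rho y.
apply/negP => hin; have := hmax c hcy; apply/negP; rewrite -ltnNge.
apply: rho_lt; rewrite /grp hin (negbTE hcx) /=.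
by case: (_ == a); case: (_ == b).
Qed.

Definition Bx' : {ffun V -> V} := [ffun v => if v == x then b else Bx v].

Lemma Bx_bracket : is_bracket e Bx.
Proof. exact: rb_bracket rho_inj. Qed.

Lemma no_loop u : ~~ e u u.
Proof. by apply/negP => h; have := acyc h; rewrite connect0. Qed.

Lemma Bx'_bracket : is_bracket e Bx'.
Proof.
case/andP: Bx_bracket => /forallP hp /forallP hm.
apply/andP; split; apply/forallP => v; apply/implyP => hv; rewrite ffunE.
  have [evx|nvx] := eqVneq v x; last exact: (implyP (hp v)).
  by move: hxm; rewrite /is_match -evx hv.
have [evx|nvx] := eqVneq v x.
  subst v; apply/existsP; exists ub; rewrite hub ffunE.
  have -> : (ub == x) = false by apply/eqP => h; move: (no_loop x); rewrite -{1}h hub.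
  by rewrite Bx_ub eqxx.
have /existsP [u /andP [heu hBu]] := implyP (hm v) hv.
apply/existsP; exists u; rewrite heu [Bx' u]ffunE /=.
have [eux|nux] := eqVneq u x; last by [].
subst u; exfalso; move: (Bx_parent heu); rewrite (eqP hBu) Bx_x.
by rewrite (Pl_mono (connect1 hua) haua).
Qed.

Lemma Bx_neq : Bx != Bx'.
Proof.
apply/eqP => h; have := congr1 (fun f : {ffun V -> V} => f x) h.
by rewrite /= [Bx' x]ffunE eqxx Bx_x => /eqP; rewrite (negbTE hab).
Qed.

Lemma score_eq (R : realType) (sigma : V -> R) (Bi : {ffun V -> V}) :
  Bi x \notin [set a; b] -> score e sigma Bi Bx = score e sigma Bi Bx'.
Proof.
move=> hBi; rewrite /score; apply: eq_bigl => v; rewrite [Bx' v]ffunE.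
have [->|//] := eqVneq v x.
move: hBi; rewrite !inE negb_or => /andP [h1 h2].
by rewrite Bx_x (negbTE h1) (negbTE h2) !andbF.
Qed.

End Construct.


Lemma pair_res (R : realType) (sigma : V -> R) a b :
  is_player e a -> is_player e b -> a != b ->
  let C := [set B in brackets e | if xab e a b is Some x then B x \in [set a; b] else false] in
  [/\ (#|brackets e| - #|C| < res e sigma)%N, (#|C| <= #|brackets e|)%N & (0 < #|brackets e|)%N].
Proof.
move=> ha hb hab C.
have [x hx hC] : exists2 x, is_xab e a b x & C = [set B in brackets e | B x \in [set a; b]].
  rewrite /C /xab; case: pickP => [x hx|hn]; first by exists x.
  by have [x hx] := xab_exists ha hb hab; move: (hn x); rewrite hx.
case/andP: hx => hxm /existsP [ua /existsP [ub /and4P [hua hub hPa hPb]]].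
have [haua hbua] := I2' hab hPa.
have hba : b != a by rewrite eq_sym.
move: hPb; rewrite setUC => hPb.
have [hbub haub] := I2' hba hPb.
have hB := Bx_bracket a b x.
have hB' := Bx'_bracket ha hb hab hxm hua hub haua hbub haub.
have hne := Bx_neq ha hb hab hxm hua hub haua hbub haub.
have hCsub : C \subset brackets e by rewrite hC; apply/subsetP => B; rewrite inE => /andP [].
have hD : #|brackets e :\: C| = #|brackets e| - #|C|.
  by rewrite cardsD (setIidPr hCsub).
have hBin : Bx a b x \in brackets e by rewrite inE.
have nonres : forall r, r <= #|brackets e :\: C| -> ~~ all_resolving e sigma r.
  move=> r hr; apply/negP => /forallP hall.
  set Dl := enum (brackets e :\: C).
  set S := [set Bi in take r Dl].
  have hS : S \subset brackets e :\: C.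
    by apply/subsetP => Bi; rewrite inE => /mem_take; rewrite mem_enum.
  have hcard : #|S| = r.
    rewrite cardsE; move/card_uniqP: (take_uniq r (enum_uniq (mem (brackets e :\: C)))) => ->.
    by rewrite size_takel // -cardE.
  have := hall S; rewrite (subset_trans hS (subsetDl _ _)) hcard eqxx /= => hres.
  move/forallP: hres => /(_ (Bx a b x)) /implyP /(_ hBin) /forallP /(_ (Bx' a b x)).
  rewrite inE hB' /= hne /= => /existsP [Bi /andP [hBi hsc]].
  move/subsetP: hS => /(_ Bi hBi); rewrite inE hC inE => /andP [hnot hbr].
  rewrite hbr /= in hnot.
  by rewrite (score_eq ha hb hab hxm hua hub haua hbub haub sigma hnot) eqxx in hsc.
split.
- rewrite -hD /res; case: ex_minnP => m hm _.
  rewrite ltnNge; apply/negP => hle; by move/negP: (nonres m hle).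
- by apply: subset_leq_card.
- by apply/card_gt0P; exists (Bx a b x).
Qed.

End Graph.

Local Open Scope ring_scope.

Theorem proposition4p4 (V : finType) (e : rel V) (R : realType)
    (sigma : V -> R) :
  single_elim e ->
  (2 <= #|[set v | is_player e v]|)%N ->
  (forall x, is_match e x -> 0 < sigma x) ->
  (1 - q_pair e R) * (#|brackets e|%:R) < (res e sigma)%:R.
Proof.
move=> hse hpl _.
have key : forall a b, is_player e a -> is_player e b -> a != b ->
   (1 - pr_pair e R a b) * (#|brackets e|%:R) < (res e sigma)%:R.
  move=> a b ha hb hab.
  have [h1 h2 h3] := pair_res hse sigma ha hb hab.
  have hN : (#|brackets e|%:R : R) != 0 by rewrite pnatr_eq0 -lt0n.
  by rewrite /pr_pair mulrBl mul1r divfK // -natrB // ltr_nat.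
have [a [b [ha hb hab]]] := card_gt1P hpl.
rewrite !inE in ha hb.
have hres0 : (0 < res e sigma)%N.
  by case: (pair_res hse sigma ha hb hab) => h _ _; exact: leq_ltn_trans (leq0n _) h.
rewrite /q_pair; apply: (big_ind (fun m => (1 - m) * #|brackets e|%:R < (res e sigma)%:R)).
- by rewrite subrr mul0r ltr0n.
- by move=> m1 m2 h1 h2; rewrite /Num.min; case: ifP.
- by move=> [c d] /and3P [hc hd hcd]; exact: key.
Qed.
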